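(* Let $(R,\mathfrak m,k)$ be a Noetherian local ring of dimension $d$, $j\ge2$, and $M$ a finitely generated $R$-module with $\operatorname{pd}_RM=1$. If $M$ satisfies the $(SW_j)$ condition and $\beta_1^R(M)\ge d$, then $\beta_t^R(\mathcal S_j(M))\ge\binom{d}{t}$ for all $t=0,1,\dots,\operatorname{pd}_R\mathcal S_j(M)$.
   Context: $\beta_i^R(N)$ is the $i$-th Betti number (rank of the $i$-th module in a minimal free resolution of $N$). $\mathcal S_j(M)$ is the $j$-th graded component of the symmetric algebra $\mathcal S_R(M)$. For a free module $F$ of finite rank, $D_a(F)$ is the $a$-th divided power and $\Lambda^aF$ the $a$-th exterior power. For a minimal free resolution $\mathbf F_\bullet:0\to F_1\xrightarrow{\phi_1}F_0$ of $M$ (i.e. $\operatorname{Im}\phi_1\subseteq\mathfrak mF_0$), the complex $\mathcal S_j\mathbf F_\bullet$ is $0\to D_{j-l}F_0\otimes\Lambda^lF_1\to\cdots\to D_{j-1}F_0\otimes\Lambda^1F_1\to D_jF_0$, $l=\min\{\operatorname{rank}F_1,j\}$, with $(\mathcal S_j\mathbf F_\bullet)_t=D_{j-t}F_0\otimes\Lambda^tF_1$ and differential (up to sign) $f_1^{(c_1)}\cdots f_r^{(c_r)}\otimes(e_{1}\wedge\cdots\wedge e_{t})\mapsto\sum_s(-1)^s f_1^{(c_1)}\cdots f_r^{(c_r)}\cup\phi_1(e_{s})\otimes e_1\wedge\cdots\widehat{e_s}\cdots\wedge e_t$, where $\cup$ multiplies a divided power monomial by a basis element $f_m$ by raising the exponent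 of $f_m$ by one (extended linearly). $M$ satisfies the $(SW_j)$ condition if $\mathcal S_j\mathbf F_\bullet$ is a finite free resolution of $\mathcal S_j(M)$. Standing assumption: the characteristic of $R$ is such that this construction is a complex (e.g. small integers invertible in $R$). *)

(* Defs.v *)
From mathcomp Require Import all_boot all_order all_algebra all_fingroup.
Set Implicit Arguments. Unset Strict Implicit. Unset Printing Implicit Defensive.
Import GRing.Theory.
Local Open Scope ring_scope.

Section Defs.
Variable R : comUnitRingType.

Definition is_ideal (I : R -> Prop) : Prop :=
  I 0 /\ (forall x y, I x -> I y -> I (x + y)) /\ (forall r x, I x -> I (r * x)).

Definition is_prime (P : R -> Prop) : Prop :=
  is_ideal P /\ ~ P 1 /\ (forall x y, P (x * y) -> P x \/ P y).

Definition noetherian : Prop :=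
  forall I : R -> Prop, is_ideal I ->
    exists n (g : 'I_n -> R), forall x, I x <-> exists c : 'I_n -> R, x = \sum_i c i * g i.

(* local ring: the non-units form an ideal (the maximal ideal m) *)
Definition local_ring : Prop :=
  forall x y : R, x \notin GRing.unit -> y \notin GRing.unit -> x + y \notin GRing.unit.

Definition in_max_ideal (x : R) : bool := x \notin GRing.unit.

Definition prime_chain (n : nat) (P : nat -> R -> Prop) : Prop :=
  (forall i, (i <= n)%N -> is_prime (P i)) /\
  (forall i, (i < n)%N -> (forall x, P i x -> P i.+1 x) /\ exists x, P i.+1 x /\ ~ P i x).

Definition krull_dim (d : nat) : Prop :=
  (exists P, prime_chain d P) /\ ~ (exists P, prime_chain d.+1 P).

Definition lin (U V : lmodType R) (f : U -> V) : Prop :=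
  forall (a : R) (u v : U), f (a *: u + v) = a *: f u + f v.

Definition fin_gen (M : lmodType R) : Prop :=
  exists n (g : 'I_n -> M), forall x, exists c : 'I_n -> R, x = \sum_i c i *: g i.

(* free resolution  ... -> R^(rk 2) -> R^(rk 1) -> R^(rk 0) -> N -> 0,
   row-vector convention: the map F_(i+1) -> F_i is v |-> v *m dm i *)
Definition is_free_res (N : lmodType R) (rk : nat -> nat)
  (dm : forall i, 'M[R]_(rk i.+1, rk i)) (aug : 'rV[R]_(rk 0) -> N) : Prop :=
  lin aug /\ (forall y, exists v, aug v = y) /\
  (forall v, aug v = 0 <-> exists w, v = w *m dm 0) /\
  (forall i (v : 'rV[R]_(rk i.+1)), v *m dm i = 0 <-> exists w, v = w *m dm i.+1).

Definition minimal_res (rk : nat -> nat) (dm : forall i, 'M[R]_(rk i.+1, rk i)) : Prop :=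
  forall i a b, in_max_ideal (dm i a b).

Definition betti (N : lmodType R) (t n : nat) : Prop :=
  exists rk dm aug, @is_free_res N rk dm aug /\ minimal_res dm /\ rk t = n.

Definition pdim (N : lmodType R) (p : nat) : Prop :=
  exists rk dm aug, @is_free_res N rk dm aug /\ minimal_res dm /\
    rk p <> 0%N /\ (forall i, (p < i)%N -> rk i = 0%N).

Definition upd (M : lmodType R) (j : nat) (x : 'I_j -> M) (k : 'I_j) (y : M) : 'I_j -> M :=
  fun i => if i == k then y else x i.

Definition multilinear (M Q : lmodType R) (j : nat) (nu : ('I_j -> M) -> Q) : Prop :=
  forall x k (a : R) (u v : M),
    nu (upd x k (a *: u + v)) = a *: nu (upd x k u) + nu (upd x k v).

Definition symmetric_map (M Q : lmodType R) (j : nat) (nu : ('I_j -> M) -> Q) : Prop :=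
  forall (s : 'S_j) x, nu (fun i => x (s i)) = nu x.

Definition sym_power (M : lmodType R) (j : nat) (S : lmodType R) (mu : ('I_j -> M) -> S) : Prop :=
  multilinear mu /\ symmetric_map mu /\
  forall (Q : lmodType R) (nu : ('I_j -> M) -> Q), multilinear nu -> symmetric_map nu ->
    exists g : S -> Q, lin g /\ (forall x, g (mu x) = nu x) /\
      (forall g' : S -> Q, lin g' -> (forall x, g' (mu x) = nu x) -> forall s, g' s = g s).

(* basis of (S_j F)_t = D_(j-t)F0 (x) Lambda^t F1: pairs (c, E) with c a divided power
   monomial (exponent vector) of degree j - t and E a t-subset of the basis of F1 *)
Definition SBasis (j f0 f1 : nat) := ({ffun 'I_f0 -> 'I_j.+1} * {set 'I_f1})%type.

Definition inB (j f0 f1 : nat) (t : nat) (b : SBasis j f0 f1) : bool :=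
  [&& (t <= j)%N, #|b.2| == t & (\sum_i (b.1 i : nat) == j - t)%N].

Definition incr (j f0 : nat) (c : {ffun 'I_f0 -> 'I_j.+1}) (m : 'I_f0) : {ffun 'I_f0 -> 'I_j.+1} :=
  [ffun i => if i == m then inord (c i).+1 else c i].

(* coefficient of the basis element b' in the differential of b:
   f^(c) (x) e_E |-> sum_s (-1)^s f^(c) \cup phi(e_s) (x) e_(E \ e_s) *)
Definition Scoef (j f0 f1 : nat) (phi : 'M[R]_(f1, f0)) (b b' : SBasis j f0 f1) : R :=
  \sum_(e in b.2) \sum_(m : 'I_f0)
     ((b'.2 == b.2 :\ e) && (b'.1 == incr b.1 m))%:R *
     ((-1) ^+ #|[set x in b.2 | (x < e)%N]| * phi e m).

Definition Sdiff (j f0 f1 : nat) (phi : 'M[R]_(f1, f0)) (v : SBasis j f0 f1 -> R)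
  (b' : SBasis j f0 f1) : R := \sum_b v b * Scoef phi b b'.

Definition supported (j f0 f1 t : nat) (v : SBasis j f0 f1 -> R) : Prop :=
  forall b, ~~ inB t b -> v b = 0.

Definition mono_seq (M : lmodType R) (j f0 : nat) (pi : 'rV[R]_f0 -> M)
  (c : {ffun 'I_f0 -> 'I_j.+1}) : 'I_j -> M :=
  fun i => nth 0 (flatten [seq nseq (c m) (pi (delta_mx 0 m)) | m <- enum 'I_f0]) i.

(* augmentation D_j F0 -> S_j(M) induced by pi *)
Definition Saug (M S : lmodType R) (j f0 f1 : nat) (pi : 'rV[R]_f0 -> M)
  (mu : ('I_j -> M) -> S) (v : SBasis j f0 f1 -> R) : S :=
  \sum_(b | inB 0 b) v b *: mu (mono_seq pi b.1).

Definition Scomplex_resolves (M S : lmodType R) (j f0 f1 : nat) (phi : 'M[R]_(f1, f0))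
  (pi : 'rV[R]_f0 -> M) (mu : ('I_j -> M) -> S) : Prop :=
  (forall y, exists v : SBasis j f0 f1 -> R, supported 0 v /\ Saug pi mu v = y) /\
  (forall v : SBasis j f0 f1 -> R, supported 0 v ->
     (Saug pi mu v = 0 <-> exists w : SBasis j f0 f1 -> R, supported 1 w /\ forall b, v b = Sdiff phi w b)) /\
  (forall t (v : SBasis j f0 f1 -> R), (1 <= t)%N -> supported t v ->
     ((forall b, Sdiff phi v b = 0) <->
      exists w : SBasis j f0 f1 -> R, supported t.+1 w /\ forall b, v b = Sdiff phi w b)).

Definition rk2 (f0 f1 : nat) (i : nat) : nat :=
  match i with 0 => f0 | 1 => f1 | _ => 0%N end.

Definition dm2 (f0 f1 : nat) (phi : 'M[R]_(f1, f0)) :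
  forall i, 'M[R]_(rk2 f0 f1 i.+1, rk2 f0 f1 i) :=
  fun i => match i return 'M[R]_(rk2 f0 f1 i.+1, rk2 f0 f1 i) with
           | 0 => phi | _.+1 => 0 end.

Definition SW (M : lmodType R) (j : nat) (S : lmodType R) (mu : ('I_j -> M) -> S) : Prop :=
  exists f0 f1 (phi : 'M[R]_(f1, f0)) (pi : 'rV[R]_f0 -> M),
    is_free_res (dm2 phi) pi /\ minimal_res (dm2 phi) /\
    Scomplex_resolves phi pi mu.

End Defs.

(* Main.v *)
Require Import Defs.
From mathcomp Require Import all_boot all_order all_algebra all_fingroup.
From Stdlib Require Import FunctionalExtensionality.
From mathcomp Require Import zify.
Set Implicit Arguments. Unset Strict Implicit. Unset Printing Implicit Defensive.
Import GRing.Theory.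
Local Open Scope ring_scope.

Section Local.
Variable R : comUnitRingType.
Hypothesis loc : local_ring R.

Definition nu (x : R) := x \notin GRing.unit.

Lemma nu0 : nu 0. Proof. by rewrite /nu unitr0. Qed.
Lemma nu1 : ~~ nu 1. Proof. by rewrite /nu unitr1. Qed.
Lemma nuD x y : nu x -> nu y -> nu (x + y). Proof. exact: loc. Qed.
Lemma nuN x : nu x -> nu (- x). Proof. by rewrite /nu unitrN. Qed.
Lemma nuMl x y : nu y -> nu (x * y).
Proof. by rewrite /nu unitrM; apply: contra => /andP[]. Qed.
Lemma nuMr x y : nu x -> nu (x * y).
Proof. by rewrite mulrC; apply: nuMl. Qed.
Lemma nuB x y : nu x -> nu y -> nu (x - y).
Proof. by move=> hx hy; apply: nuD => //; apply: nuN. Qed.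
Lemma nu_sum (I : Type) (r : seq I) (P : pred I) (F : I -> R) :
  (forall i, P i -> nu (F i)) -> nu (\sum_(i <- r | P i) F i).
Proof. move=> h; apply: (big_ind (fun x => nu x)); [exact: nu0 | exact: nuD | exact: h]. Qed.

Definition mxnu m n (A : 'M[R]_(m, n)) := forall i j, nu (A i j).

Lemma mxnu_mulr m n p (A : 'M[R]_(m, n)) (B : 'M[R]_(n, p)) : mxnu B -> mxnu (A *m B).
Proof. by move=> h i j; rewrite mxE; apply: nu_sum => k _; apply: nuMl. Qed.
Lemma mxnu_mull m n p (A : 'M[R]_(m, n)) (B : 'M[R]_(n, p)) : mxnu A -> mxnu (A *m B).
Proof. by move=> h i j; rewrite mxE; apply: nu_sum => k _; apply: nuMr. Qed.
Lemma mxnuD m n (A B : 'M[R]_(m, n)) : mxnu A -> mxnu B -> mxnu (A + B).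
Proof. by move=> ha hb i j; rewrite mxE; apply: nuD. Qed.
Lemma mxnu0 m n : mxnu (0 : 'M[R]_(m, n)).
Proof. by move=> i j; rewrite mxE; apply: nu0. Qed.

Lemma unit_of_nu1 x : nu (x - 1) -> x \is a GRing.unit.
Proof.
move=> h; apply/negPn/negP => hx.
have := nuD hx (nuN h); rewrite opprB addrC subrK => h1.
by move: nu1; rewrite h1.
Qed.

Lemma prod_nu1 (I : finType) (F : I -> R) :
  (forall i, nu (F i - 1)) -> nu (\prod_i F i - 1).
Proof.
move=> h; apply: (big_ind (fun p => nu (p - 1))).
- by rewrite subrr; apply: nu0.
- move=> p q hp hq.
  have -> : p * q - 1 = (p - 1) * q + (q - 1) by rewrite mulrBl mul1r addrA subrK.
  by apply: nuD => //; apply: nuMr.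
- by move=> i _; apply: h.
Qed.

Lemma det_unit n (E : 'M[R]_n) : mxnu E -> \det (1%:M - E) \is a GRing.unit.
Proof.
move=> hE; apply: unit_of_nu1.
rewrite /determinant (bigD1 1%g) //= odd_perm1 expr0 mul1r addrAC.
apply: nuD.
  apply: prod_nu1 => i; rewrite perm1 !mxE eqxx /= addrAC subrr add0r.
  exact: nuN.
apply: nu_sum => s hs.
have : ~~ [forall i, s i == i].
  apply: contra hs => /forallP h; apply/eqP/permP => i; rewrite perm1; exact/eqP.
rewrite negb_forall => /existsP [i hi].
apply: nuMl; rewrite (bigD1 i) //=; apply: nuMr.
rewrite !mxE eq_sym (negbTE hi) /= add0r; exact: nuN.
Qed.

Lemma rank_aux b c (P : 'M[R]_(b + c.+1, b)) (Q : 'M[R]_(b, b + c.+1)) :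
  \det (P *m Q) \isn't a GRing.unit.
Proof.
have -> : P *m Q = row_mx P 0 *m col_mx Q (0 : 'M_(c.+1, b + c.+1)).
  by rewrite mul_row_col mul0mx addr0.
rewrite det_mulmx (expand_det_col _ (rshift b (0 : 'I_c.+1))).
rewrite big1 ?mul0r ?unitr0 // => i _.
by rewrite row_mxEr mxE mul0r.
Qed.

Lemma rank_le a b (P : 'M[R]_(a, b)) (Q : 'M[R]_(b, a)) :
  \det (P *m Q) \is a GRing.unit -> (a <= b)%N.
Proof.
rewrite leqNgt; apply: contraL => hab.
have e : a = (b + (a - b.+1).+1)%N by rewrite addnS -addSn subnKC.
move: P Q; rewrite e => P Q; exact: rank_aux.
Qed.


Section Lin.
Variables (U V : lmodType R) (f : U -> V).
Hypothesis hf : lin f.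
Lemma lin0 : f 0 = 0.
Proof.
have := hf 1 0 0; rewrite scaler0 addr0 scale1r => h.
by have := congr1 (fun x => x - f 0) h; rewrite /= subrr addrK.
Qed.
Lemma linD u v : f (u + v) = f u + f v.
Proof. by have := hf 1 u v; rewrite !scale1r. Qed.
Lemma linZ a u : f (a *: u) = a *: f u.
Proof. by have := hf a u 0; rewrite !addr0 lin0 addr0. Qed.
Lemma linN u : f (- u) = - f u.
Proof. by rewrite -scaleN1r linZ scaleN1r. Qed.
Lemma linB u v : f (u - v) = f u - f v.
Proof. by rewrite linD linN. Qed.
Lemma lin_sum (I : Type) (r : seq I) (P : pred I) (F : I -> U) :
  f (\sum_(i <- r | P i) F i) = \sum_(i <- r | P i) f (F i).
Proof. exact: (big_morph f linD lin0). Qed.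
End Lin.

Section Res.
Variables (N : lmodType R) (rk : nat -> nat) (dm : forall i, 'M[R]_(rk i.+1, rk i))
  (aug : 'rV[R]_(rk 0) -> N).
Hypothesis hres : is_free_res dm aug.

Lemma dd i : dm i.+1 *m dm i = 0.
Proof.
case: hres => _ [_ [_ h]].
apply/row_matrixP => r; rewrite row_mul row0; apply/h.
by exists 'e_r; rewrite rowE.
Qed.

Lemma aug_d0 w : aug (w *m dm 0) = 0.
Proof. case: hres => _ [_ [h _]]; apply/h; by exists w. Qed.

Lemma lift_ker i a (X : 'M[R]_(a, rk i.+1)) : X *m dm i = 0 ->
  exists Y : 'M[R]_(a, rk i.+2), X = Y *m dm i.+1.
Proof.
case: hres => _ [_ [_ h]] hX.
have : forall r, exists w : 'rV[R]_(rk i.+2), row r X = w *m dm i.+1.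
  by move=> r; apply/h; rewrite -row_mul hX row0.
case/fin_all_exists => w hw.
exists (\matrix_(r, k) w r 0 k).
apply/row_matrixP => r; rewrite row_mul hw; congr (_ *m _).
by apply/rowP => k; rewrite !mxE.
Qed.

Lemma lift_aug a (X : 'M[R]_(a, rk 0)) : (forall r, aug (row r X) = 0) ->
  exists Y : 'M[R]_(a, rk 1), X = Y *m dm 0.
Proof.
case: hres => _ [_ [h _]] hX.
have : forall r, exists w : 'rV[R]_(rk 1), row r X = w *m dm 0.
  by move=> r; apply/h.
case/fin_all_exists => w hw.
exists (\matrix_(r, k) w r 0 k).
apply/row_matrixP => r; rewrite row_mul hw; congr (_ *m _).
by apply/rowP => k; rewrite !mxE.
Qed.

Lemma lift_surj a (u : 'I_a -> N) : exists X : 'M[R]_(a, rk 0), forall r, aug (row r X) = u r.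
Proof.
case: hres => _ [h _].
have : forall r, exists w : 'rV[R]_(rk 0), aug w = u r by move=> r; apply: h.
case/fin_all_exists => w hw.
exists (\matrix_(r, k) w r 0 k) => r.
rewrite -hw; congr aug; by apply/rowP => k; rewrite !mxE.
Qed.
End Res.

Lemma aug_mul (N : lmodType R) n n' (aug : 'rV[R]_n -> N) (aug' : 'rV[R]_n' -> N)
  (F : 'M[R]_(n, n')) : lin aug -> lin aug' ->
  (forall r, aug' (row r F) = aug 'e_r) -> forall v, aug' (v *m F) = aug v.
Proof.
move=> ha ha' h v.
rewrite {1}(row_sum_delta v) mulmx_suml (lin_sum ha') {2}(row_sum_delta v) (lin_sum ha).
apply: eq_bigr => k _.
by rewrite -scalemxAl (linZ ha') (linZ ha) -rowE h.
Qed.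

Section Compare.
Variables (N : lmodType R)
  (rk : nat -> nat) (dm : forall i, 'M[R]_(rk i.+1, rk i)) (aug : 'rV[R]_(rk 0) -> N)
  (rk' : nat -> nat) (dm' : forall i, 'M[R]_(rk' i.+1, rk' i)) (aug' : 'rV[R]_(rk' 0) -> N).
Hypotheses (hF : is_free_res dm aug) (hG : is_free_res dm' aug')
  (mF : minimal_res dm) (mG : minimal_res dm').

Definition Inv t := exists (f : 'M[R]_(rk t, rk' t)) (g : 'M[R]_(rk' t, rk t))
  (f' : 'M[R]_(rk t.+1, rk' t.+1)) (g' : 'M[R]_(rk' t.+1, rk t.+1))
  (s : 'M[R]_(rk t, rk t.+1)),
  [/\ dm t *m f = f' *m dm' t, dm' t *m g = g' *m dm t,
      dm t *m (1%:M - f *m g - s *m dm t) = 0 & mxnu (1%:M - f *m g - s *m dm t)].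

Lemma mxnu_dm i : mxnu (dm i).
Proof. move=> a b; exact: mF. Qed.

Lemma Inv0 : Inv 0.
Proof.
have linF : lin aug by case: hF.
have linG : lin aug' by case: hG.
have [f hf] := lift_surj hG (fun r : 'I_(rk 0) => aug 'e_r).
have [g hg] := lift_surj hF (fun r : 'I_(rk' 0) => aug' 'e_r).
have hf' := aug_mul linF linG hf.
have hg' := aug_mul linG linF hg.
have [f1 hf1] : exists Y : 'M[R]_(rk 1, rk' 1), dm 0 *m f = Y *m dm' 0.
  apply: (lift_aug hG) => r; rewrite row_mul hf' rowE; exact: (aug_d0 hF).
have [g1 hg1] : exists Y : 'M[R]_(rk' 1, rk 1), dm' 0 *m g = Y *m dm 0.
  apply: (lift_aug hF) => r; rewrite row_mul hg' rowE; exact: (aug_d0 hG).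
have [s hs] : exists Y : 'M[R]_(rk 0, rk 1), 1%:M - f *m g = Y *m dm 0.
  apply: (lift_aug hF) => r.
  by rewrite rowE mulmxBr mulmx1 (linB linF) mulmxA hg' hf' subrr.
exists f, g, f1, g1, s; split => //; rewrite hs subrr ?mulmx0 //; exact: mxnu0.
Qed.

Lemma InvS t : Inv t -> Inv t.+1.
Proof.
case=> f [g [f' [g' [s [h1 h2 h3 h4]]]]].
set X := 1%:M - f' *m g' - dm t *m s.
have hX : X *m dm t = 0.
  have e1 : f' *m g' *m dm t = dm t *m (f *m g).
    by rewrite -mulmxA -h2 mulmxA -h1 mulmxA.
  by rewrite -h3 /X !mulmxBl !mulmxBr mul1mx mulmx1 e1 !mulmxA.
have [s' hs'] := lift_ker hF hX.
have [f'' hf''] : exists Y : 'M[R]_(rk t.+2, rk' t.+2), dm t.+1 *m f' = Y *m dm' t.+1.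
  apply: (lift_ker hG); by rewrite -mulmxA -h1 mulmxA (dd hF) mul0mx.
have [g'' hg''] : exists Y : 'M[R]_(rk' t.+2, rk t.+2), dm' t.+1 *m g' = Y *m dm t.+1.
  apply: (lift_ker hF); by rewrite -mulmxA -h2 mulmxA (dd hG) mul0mx.
have e : 1%:M - f' *m g' - s' *m dm t.+1 = dm t *m s.
  by rewrite -hs' /X opprB addrC subrK.
exists f', g', f'', g'', s'; split => //; rewrite e.
  by rewrite mulmxA (dd hF) mul0mx.
move=> a b; rewrite mxE; apply: nu_sum => k _; apply: nuMr; exact: mF.
Qed.

Lemma compare t : (rk t <= rk' t)%N.
Proof.
have : Inv t by elim: t => [|t IH]; [exact: Inv0 | exact: InvS].
case=> f [g [f' [g' [s [h1 h2 h3 h4]]]]].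
apply: (@rank_le _ _ f g).
have -> : f *m g = 1%:M - ((1%:M - f *m g - s *m dm t) + s *m dm t).
  by rewrite subrK opprB addrC subrK.
apply: det_unit; apply: mxnuD => //; exact: mxnu_mulr (@mxnu_dm t).
Qed.
End Compare.


Section SC.
Variables (M S : lmodType R) (j f0 f1 : nat) (phi : 'M[R]_(f1, f0))
  (pi : 'rV[R]_f0 -> M) (mu : ('I_j -> M) -> S).
Local Notation T := (SBasis j f0 f1).

Definition AS t : {pred T} := fun b => inB t b.
Definition rkS t := #|AS t|.
Definition ev t (x : 'I_(rkS t)) : T := enum_val x.
Lemma evP t (x : 'I_(rkS t)) : inB t (ev x). Proof. exact: (enum_valP x). Qed.
Lemma ev_inj t : injective (@ev t). Proof. exact: enum_val_inj. Qed.
Lemma ev_surj t b : inB t b -> exists x : 'I_(rkS t), ev x = b.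
Proof.
move=> hb; have hb' : b \in AS t by [].
by exists (enum_rank_in hb' b); apply: enum_rankK_in.
Qed.

Definition ext t (v : 'rV[R]_(rkS t)) : T -> R :=
  fun b => \sum_(x < rkS t) v 0 x * (ev x == b)%:R.
Definition res t (u : T -> R) : 'rV[R]_(rkS t) := \row_(x < rkS t) u (ev x).

Lemma ext_val t (v : 'rV[R]_(rkS t)) x : ext v (ev x) = v 0 x.
Proof.
rewrite /ext (bigD1 x) //= eqxx mulr1 big1 ?addr0 // => y hy.
by rewrite (inj_eq (@ev_inj t)) (negbTE hy) mulr0.
Qed.
Lemma ext_out t (v : 'rV[R]_(rkS t)) b : ~~ inB t b -> ext v b = 0.
Proof.
move=> hb; rewrite /ext big1 // => x _.
have [e|] := eqVneq (ev x) b; last by rewrite mulr0.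
by move: hb; rewrite -e evP.
Qed.
Lemma ext_supp t (v : 'rV[R]_(rkS t)) : supported t (ext v).
Proof. move=> b; exact: ext_out. Qed.
Lemma ext_res t u : supported t u -> ext (res t u) = u.
Proof.
move=> hu; apply: functional_extensionality => b.
case hb: (inB t b); last by rewrite ext_out ?hb // hu ?hb.
by have [x <-] := ev_surj hb; rewrite ext_val mxE.
Qed.
Lemma res_ext t (v : 'rV[R]_(rkS t)) : res t (ext v) = v.
Proof. by apply/rowP => x; rewrite mxE ext_val ?ord1. Qed.
Lemma ext_lin t a (u v : 'rV[R]_(rkS t)) : ext (a *: u + v) = fun b => a * ext u b + ext v b.
Proof.
apply: functional_extensionality => b.
rewrite /ext mulr_sumr -big_split; apply: eq_bigr => x _.
by rewrite !mxE mulrDl mulrA.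
Qed.
Lemma ext0 t : ext (0 : 'rV[R]_(rkS t)) = fun _ => 0.
Proof.
apply: functional_extensionality => b.
by rewrite /ext big1 // => x _; rewrite mxE mul0r.
Qed.

Definition dmS i : 'M[R]_(rkS i.+1, rkS i) := \matrix_(x, y) Scoef phi (ev x) (ev y).

Lemma Scoef_supp t (b b' : T) : inB t.+1 b -> Scoef phi b b' != 0 -> inB t b'.
Proof.
move=> hb; apply: contraR => hb'.
rewrite /Scoef big1 // => e he; rewrite big1 // => m _.
case: andP => [[/eqP e2 /eqP e1]|_]; last by rewrite mul0r.
exfalso; move/negP: hb'; apply.
move: hb => /and3P [htj /eqP hc /eqP hs].
have hc' : #|b.2 :\ e| = t.
  by move: hc; rewrite (cardsD1 e) he; case.
have hsum : (\sum_i (b.1 i : nat) = b.1 m + \sum_(i | i != m) (b.1 i : nat))%N.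
  by rewrite (bigD1 m).
have hm : (b.1 m < j)%N by lia.
have hs' : (\sum_i (incr b.1 m i : nat) = (b.1 m).+1 + \sum_(i | i != m) (b.1 i : nat))%N.
  rewrite (bigD1 m) //= /incr ffunE eqxx inordK //; congr (_ + _)%N.
  by apply: eq_bigr => i hi; rewrite ffunE (negbTE hi).
apply/and3P; split; first by lia.
  by rewrite e2 hc'.
by rewrite e1 hs'; apply/eqP; lia.
Qed.

Lemma Sdiff_ext t (v : 'rV[R]_(rkS t.+1)) : Sdiff phi (ext v) = ext (v *m dmS t).
Proof.
apply: functional_extensionality => b'.
have e : Sdiff phi (ext v) b' = \sum_(x < rkS t.+1) v 0 x * Scoef phi (ev x) b'.
  rewrite /Sdiff /ext; under eq_bigr do rewrite mulr_suml.
  rewrite exchange_big /=; apply: eq_bigr => x _.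
  rewrite (bigD1 (ev x)) //= eqxx mulr1 big1 ?addr0 // => b hb.
  by rewrite eq_sym (negbTE hb) mulr0 mul0r.
rewrite e; case hb: (inB t b').
  have [y <-] := ev_surj hb; rewrite ext_val mxE.
  by apply: eq_bigr => x _; rewrite mxE.
rewrite ext_out ?hb // big1 // => x _.
have := @Scoef_supp t (ev x) b' (evP x); rewrite hb => h.
by case: (eqVneq (Scoef phi (ev x) b') 0) => [->|/h //]; rewrite mulr0.
Qed.

Hypotheses (hmin : minimal_res (dm2 phi)) (hsc : Scomplex_resolves phi pi mu).

Lemma minS : minimal_res dmS.
Proof.
move=> i x y; rewrite mxE; apply: nu_sum => e _; apply: nu_sum => m _.
apply: nuMl; apply: nuMl; have := @hmin 0%N e m; rewrite /in_max_ideal /nu /=; exact.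
Qed.

Definition augS (v : 'rV[R]_(rkS 0)) : S := Saug pi mu (ext v).

Lemma Saug_lin a (u w : T -> R) : Saug pi mu (fun b => a * u b + w b) = a *: Saug pi mu u + Saug pi mu w.
Proof.
rewrite /Saug scaler_sumr -big_split; apply: eq_bigr => b _.
by rewrite scalerDl scalerA.
Qed.

Lemma resS : is_free_res dmS augS.
Proof.
case: hsc => hs [h0 hh].
split; [|split; [|split]].
- by move=> a u w; rewrite /augS ext_lin Saug_lin.
- move=> y; have [v [hv e]] := hs y; exists (res 0 v); by rewrite /augS ext_res.
- move=> v; split.
    move=> hv; have [w [hw e]] := (h0 (ext v) (@ext_supp 0 v)).1 hv.
    exists (res 1 w).
    have e' : ext v = ext (res 1 w *m dmS 0).
      by rewrite -Sdiff_ext ext_res //; apply: functional_extensionality.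
    by rewrite -(res_ext v) e' res_ext.
  case=> w ->; rewrite /augS; apply: (h0 _ (ext_supp _)).2.
  exists (ext w); split; first exact: ext_supp.
  by move=> b; rewrite Sdiff_ext.
- move=> i v; split.
    move=> hv.
    have H := hh i.+1 (ext v) isT (ext_supp v).
    have [w [hw e]] : exists w, supported i.+2 w /\ forall b, ext v b = Sdiff phi w b.
      by apply/H => b; rewrite Sdiff_ext hv ext0.
    exists (res i.+2 w).
    have e' : ext v = ext (res i.+2 w *m dmS i.+1).
      by rewrite -Sdiff_ext ext_res //; apply: functional_extensionality.
    by rewrite -(res_ext v) e' res_ext.
  case=> w ev; subst v.
  have H := hh i.+1 (ext (w *m dmS i.+1)) isT (ext_supp _).
  have H' : forall b, Sdiff phi (ext (w *m dmS i.+1)) b = 0.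
    apply/H; exists (ext w); split; first exact: ext_supp.
    by move=> b; rewrite Sdiff_ext.
  have e : ext (w *m dmS i.+1 *m dmS i) = fun _ => 0.
    by rewrite -Sdiff_ext; apply: functional_extensionality.
  apply/rowP => k; have := congr1 (fun u => u (ev k)) e.
  by rewrite ext_val => ->; rewrite mxE.
Qed.

End SC.

End Local.

Theorem proposition6p5 (R : comUnitRingType) (d j : nat) (M S : lmodType R)
    (mu : ('I_j -> M) -> S) :
  noetherian R -> local_ring R -> krull_dim R d -> (2 <= j)%N ->
  fin_gen M -> pdim M 1 ->
  sym_power mu -> SW mu ->
  (forall n, betti M 1 n -> (d <= n)%N) ->
  forall p, pdim S p -> forall t, (t <= p)%N ->
    forall n, betti S t n -> ('C(d, t) <= n)%N.
Proof.
move=> _ loc _ hj _ _ _ [f0 [f1 [phi [pi [hres [hmin hsc]]]]]] hbet p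
  [rkH [dmH [augH [hH [mH [hp _]]]]]] t htp n [rkG [dmG [augG [hG [mG ert]]]]].
have hS := resS hsc.
have mS := minS loc (j:=j) hmin.
have c1 := compare loc hH hS mH p.
have c2 := compare loc hS hG mS t.
rewrite -ert; apply: leq_trans c2.
have hd : (d <= f1)%N.
  by apply: hbet; exists (rk2 f0 f1), (dm2 phi), pi; split => //.
have : (0 < rkS j f0 f1 p)%N by apply: leq_trans c1; rewrite lt0n; apply/eqP.
case/card_gt0P => b hb.
move: hb => /and3P [hpj /eqP hc /eqP hs].
have hpf1 : (p <= f1)%N by rewrite -hc; apply: leq_trans (max_card _) _; rewrite card_ord.
have htj : (t <= j)%N by apply: leq_trans hpj.
have [i0 _] : exists i0 : 'I_f0, True.
  case: (posnP f0) => hf0; last by exists (Ordinal hf0).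
  exfalso.
  have hs0 : (\sum_i (b.1 i : nat) = 0)%N.
    by apply: big1 => i; have := ltn_ord i; rewrite {2}hf0.
  have hf1 : (0 < f1)%N by move: hs; rewrite hs0; lia.
  case: hres => _ [_ [_ h]].
  have hz : ('e_(Ordinal hf1) : 'rV[R]_f1) *m dm2 phi 0 = 0.
    by apply/rowP => k; have hk : (k < f0)%N := ltn_ord k; exfalso; lia.
  have [w] := (h 0%N _).1 hz.
  move/(congr1 (fun v : 'rV[R]_f1 => v 0 (Ordinal hf1))).
  rewrite /= mulmx0 !mxE !eqxx /= => /eqP; rewrite oner_eq0.
  by [].
set c : {ffun 'I_f0 -> 'I_j.+1} := [ffun i => if i == i0 then inord (j - t) else ord0].
apply: leq_trans (leq_bin2l t hd) _.
rewrite -[f1 in 'C(f1, t)]card_ord -card_draws.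
have inj : injective (fun E : {set 'I_f1} => (c, E)) by move=> E1 E2 [].
rewrite -(card_imset _ inj).
apply: subset_leq_card; apply/subsetP => x /imsetP [E hE ->].
rewrite inE in hE.
apply/and3P; split => //=.
apply/eqP; rewrite (bigD1 i0) //= ffunE eqxx inordK ?ltnS ?leq_subr //.
rewrite big1 ?addn0 // => i hi; by rewrite ffunE (negbTE hi).
Qed.
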